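(* Let $\alpha\in\mathbb{R}\setminus\{0\}$ and $n\in\mathbb{N}$. Let $I_n$ and $f$ be as defined in the context. Then $f$ maps $I_n\setminus\{n\}$ into $(-1,1)\cup\{(-1)^n\}$. Moreover, for $x\in I_n\setminus\{n\}$ we have $f(x)=(-1)^n$ if and only if $$\left|\cos x\pi+\frac{\alpha}{4x}\sin x\pi\right|=1,$$ and $$\lim_{x\in I_n,\;x\to n} f(x)=(-1)^{n+1}.$$
   Context: Put $g(x)=\cos x\pi+\frac{\alpha}{4x}\sin x\pi$ for $x>0$. For $n\in\mathbb{N}$, let $I_n$ be the connected component containing $n$ of the set $\{x>0:\ |g(x)|\ge 1\}$; note that $|g(n)|=1$. For $x\in I_n\setminus\{n\}$ define $$f(x)=-\cos x\pi+\frac{\sin^2 x\pi}{\frac{\alpha}{4x}\sin x\pi\pm\sqrt{g(x)^2-1}} ,$$ where the sign $\pm$ is the sign of $g(x)$. *)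

(* Defs.v *)
From HB Require Import structures.
From mathcomp Require Import all_boot all_order all_algebra.
From mathcomp Require Import all_classical all_reals all_analysis.
Set Implicit Arguments. Unset Strict Implicit. Unset Printing Implicit Defensive.
Import Order.TTheory GRing.Theory Num.Theory numFieldNormedType.Exports.
Local Open Scope classical_set_scope.
Local Open Scope ring_scope.

Definition gfun {R : realType} (alpha : R) (x : R) : R :=
  cos (x * pi) + alpha / (4 * x) * sin (x * pi).

Definition Iset {R : realType} (alpha : R) (n : nat) : set R :=
  connected_component [set x : R | 0 < x /\ 1 <= `|gfun alpha x|] n%:R.

(* f(x) = -cos(x pi) + sin^2(x pi) / (alpha/(4x) sin(x pi) +- sqrt(g^2-1)),
   where +- is the sign of g(x) (g(x) <> 0 on I_n since |g| >= 1). *)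
Definition ffun {R : realType} (alpha : R) (x : R) : R :=
  - cos (x * pi) + (sin (x * pi)) ^+ 2 /
    (alpha / (4 * x) * sin (x * pi)
     + Num.sg (gfun alpha x) * Num.sqrt (gfun alpha x ^+ 2 - 1)).

(* Main.v *)
Require Import Defs.
From HB Require Import structures.
From mathcomp Require Import all_boot all_order all_algebra.
From mathcomp Require Import all_classical all_reals all_analysis.
From mathcomp Require Import ring lra.
Import Order.TTheory GRing.Theory Num.Theory numFieldNormedType.Exports.
Local Open Scope classical_set_scope.
Local Open Scope ring_scope.

Lemma alg1 (R : realFieldType) (c s A g r : R) :
  c ^+ 2 + s ^+ 2 = 1 -> g = c + A * s -> 0 <= r -> r ^+ 2 = g ^+ 2 - 1 ->
  1 <= g -> c != 1 ->
  let f := - c + s ^+ 2 / (A * s + r) in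
  0 < A * s + r /\ -1 < f /\ f <= 1 /\ (f = 1 <-> g = 1).
Proof.
move=> cs gE r0 rE g1 c1 f.
have cle : c <= 1 by nra.
have clt : c < 1 by rewrite lt_neqAle c1.
have Dpos : 0 < A * s + r by nra.
set D := A * s + r in Dpos f *.
have fD : f * D = - c * D + s ^+ 2 by rewrite /f mulrDl mulfVK ?gt_eqF.
have s2 : s ^+ 2 = 1 - c ^+ 2 by rewrite -cs; ring.
have e1 : (1 - f) * D = (1 + c) * (g - 1 + r).
  by rewrite mulrBl mul1r fD s2 gE /D; ring.
have e2 : (1 + f) * D = (1 - c) * (D + 1 + c).
  by rewrite mulrDl mul1r fD s2; ring.
have cge : -1 <= c by nra.
split=> //; split; first by nra.
split; first by nra.
split=> [f1|g1'].
  have : (1 + c) * (g - 1 + r) = 0 by rewrite -e1 f1 subrr mul0r.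
  move/eqP; rewrite mulf_eq0 => /orP[/eqP h|/eqP h]; last by lra.
  have : s ^+ 2 = 0 by rewrite s2; nra.
  move/eqP; rewrite expf_eq0 /= => /eqP s0.
  move: g1; rewrite gE s0; lra.
have r0' : r = 0 by nra.
have : (1 - f) * D = 0 by rewrite e1 g1' r0'; ring.
move/eqP; rewrite mulf_eq0 (gt_eqF Dpos) orbF subr_eq0 => /eqP; done.
Qed.

Lemma alg (R : realFieldType) (σ c s A g r : R) :
  (σ = 1 \/ σ = -1) ->
  c ^+ 2 + s ^+ 2 = 1 -> g = c + A * s -> 0 <= r -> r ^+ 2 = g ^+ 2 - 1 ->
  1 <= σ * g -> c != σ ->
  let f := - c + s ^+ 2 / (A * s + σ * r) in
  ((-1 < f < 1) \/ f = σ) /\ (f = σ <-> `|g| = 1).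
Proof.
move=> [->|->] cs gE r0 rE g1 cs' f.
  rewrite mul1r in g1; have [Dp [f1 [f2 f3]]] := @alg1 R _ _ _ _ _ cs gE r0 rE g1 cs'.
  rewrite /f mul1r; split.
    by case: (eqVneq (- c + s ^+ 2 / (A * s + r)) 1) => [->|h]; [right|left; rewrite f1 /= lt_neqAle h f2].
  by rewrite f3 ger0_norm //; lra.
have cs2 : (- c) ^+ 2 + s ^+ 2 = 1 by rewrite sqrrN.
have gE2 : - g = - c + (- A) * s by rewrite gE; ring.
have rE2 : r ^+ 2 = (- g) ^+ 2 - 1 by rewrite sqrrN.
have g2 : 1 <= - g by lra.
have c2 : - c != 1 by rewrite -(inj_eq oppr_inj) opprK.
have [Dp [f1 [f2 f3]]] := @alg1 R _ _ _ _ _ cs2 gE2 r0 rE2 g2 c2.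
have fE : f = - (- - c + s ^+ 2 / (- A * s + r)).
  rewrite /f; have -> : A * s + -1 * r = - (- A * s + r) by ring.
  by rewrite invrN mulrN opprD opprK.
rewrite fE; split.
  case: (eqVneq (- - c + s ^+ 2 / (- A * s + r)) 1) => [->|h]; [by right|left].
  have : - - c + s ^+ 2 / (- A * s + r) < 1 by rewrite lt_neqAle h f2.
  lra.
split.
  by move/oppr_inj/f3 => h; rewrite ltr0_norm; lra.
move=> h; suff -> : - - c + s ^+ 2 / (- A * s + r) = 1 by [].
by apply/f3; rewrite ler0_norm in h; lra.
Qed.

Lemma bnd (R : realFieldType) (σ c s A g r : R) :
  (σ = 1 \/ σ = -1) -> c ^+ 2 <= 1 -> g = c + A * s -> 0 <= r ->
  1 <= σ * g -> A != 0 ->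
  `| s ^+ 2 / (A * s + σ * r) | <= `|s| / `|A|.
Proof.
move=> hs c1 gE r0 g1 A0.
have cb : -1 <= c <= 1 by apply/andP; split; nra.
have key : `|A * s| <= `|A * s + σ * r|.
  case: hs g1 => -> g1.
    rewrite !ger0_norm; lra.
  rewrite !ler0_norm; lra.
have [->|s0] := eqVneq s 0; first by rewrite expr0n /= mul0r normr0 mul0r.
have As : 0 < `|A * s| by rewrite normr_gt0 mulf_neq0.
rewrite normrM normfV normrX.
have Dp : 0 < `|A * s + σ * r| := lt_le_trans As key.
apply: (@le_trans _ _ (`|s| ^+ 2 / `|A * s|)).
  apply: ler_wpM2l; first exact: exprn_ge0.
  by rewrite lef_pV2 ?posrE.
have sp : `|s| != 0 by rewrite normr_eq0.
have Ap : `|A| != 0 by rewrite normr_eq0.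
by rewrite normrM le_eqVlt; apply/orP; left; apply/eqP; field; apply/andP.
Qed.

Section S.
Variable R : realType.

Lemma cont_pi (x : R) : {for x, continuous (fun y : R => y * pi)}.
Proof.
apply: (continuousM (s:=fun y => y) (t:=fun _ => pi)); first exact: cvg_id.
exact: cvg_cst.
Qed.

Lemma gcont (alpha x : R) : 0 < x -> {for x, continuous (gfun alpha)}.
Proof.
move=> x0.
have hc : {for x, continuous (fun y : R => cos (y * pi))}.
  exact: (continuous_comp (cont_pi x) (@continuous_cos R _)).
have hs : {for x, continuous (fun y : R => sin (y * pi))}.
  exact: (continuous_comp (cont_pi x) (@continuous_sin R _)).
have hi : {for x, continuous (fun y : R => alpha / (4 * y))}.
  have h4 : {for x, continuous (fun y : R => 4 * y)}.
    by have := continuousM (cvg_cst (4:R)) (@cvg_id _ (nbhs x)); apply.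
  have h1 : {for x, continuous (fun y : R => (4 * y)^-1)}.
    by have := continuousV _ h4; apply; rewrite mulf_neq0 ?gt_eqF.
  by have := continuousM (cvg_cst alpha) h1; apply.
have := continuousD hc (continuousM hi hs); apply.
Qed.
Lemma cosnpi (n : nat) (t : R) : cos ((n%:R + t) * pi) = (-1) ^+ n * cos (t * pi).
Proof.
elim: n => [|n IH]; first by rewrite add0r expr0 mul1r.
by rewrite -natr1 -addrA (addrC 1) addrA mulrDl mul1r cosDpi IH exprS; ring.
Qed.

Lemma sinnpi (n : nat) (t : R) : sin ((n%:R + t) * pi) = (-1) ^+ n * sin (t * pi).
Proof.
elim: n => [|n IH]; first by rewrite add0r expr0 mul1r.
by rewrite -natr1 -addrA (addrC 1) addrA mulrDl mul1r sinDpi IH exprS; ring.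
Qed.

Lemma cos_lt1 (t : R) : 0 < `|t| < 1 -> cos (t * pi) < 1.
Proof.
wlog : t / 0 < t.
  move=> H /andP[t0 t1]; have [tp|tn] := ltP 0 t; first by apply: H => //; rewrite t0.
  rewrite -cosN -mulNr; apply: H; last by rewrite normrN t0.
  by rewrite oppr_gt0 lt_neqAle tn andbT; apply: contraTneq t0 => ->; rewrite normr0 ltxx.
move=> t0 /andP[_ t1]; rewrite gtr0_norm // in t1.
have e : t * pi = t * pi / 2 + t * pi / 2 by rewrite -splitr.
have sp : 0 < sin (t * pi / 2).
  apply: sin_gt0_pihalf; rewrite divr_gt0 ?mulr_gt0 ?pi_gt0 //=.
  rewrite ltr_pM2r ?invr_gt0 //; have := pi_gt0 R; nra.
have -> : cos (t * pi) = cos (t * pi / 2 + t * pi / 2) by rewrite -e.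
rewrite cosD.
have := cos2Dsin2 (t * pi / 2); nra.
Qed.

Lemma Iset_int (alpha : R) n : is_interval (Iset alpha n).
Proof. exact/connected_intervalP/component_connected. Qed.

Lemma Iset_sub (alpha : R) n x : Iset alpha n x -> 0 < x /\ 1 <= `|gfun alpha x|.
Proof. exact: connected_component_sub. Qed.

Lemma g_nat (alpha : R) (m : nat) : gfun alpha m%:R = (-1) ^+ m.
Proof.
rewrite /gfun -[m%:R]addr0 cosnpi sinnpi !mul0r cos0 sin0; ring.
Qed.

Lemma Iset_n (alpha : R) n : (0 < n)%N -> Iset alpha n n%:R.
Proof.
move=> n0; exists [set n%:R]; last by [].
split=> //; last exact: connected1.
move=> _ ->; split; first by rewrite ltr0n.
by rewrite g_nat normrX normrN1 expr1n.
Qed.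

Lemma Iset_prod (alpha : R) n a b : a <= b -> Iset alpha n a -> Iset alpha n b ->
  0 < gfun alpha a * gfun alpha b.
Proof.
move=> ab Ia Ib; rewrite ltNge; apply/negP => hp.
have sub : forall z, z \in `[a, b] -> Iset alpha n z.
  move=> z; rewrite in_itv /= => hz; exact: (@Iset_int alpha n _ _ Ia Ib _ hz).
have [c cab gc] : exists2 c, c \in `[a, b] & gfun alpha c = 0.
  apply: IVT => //.
    apply: continuous_in_subspaceT => z /[!inE] /sub /Iset_sub [z0 _].
    exact: gcont.
  rewrite ge_min le_max.
  have [h1|h1] := ltP (gfun alpha a) 0.
    apply/andP; split; apply/orP; [left|right]; nra.
  have [h2|h2] := ltP 0 (gfun alpha a).
    apply/andP; split; apply/orP; [right|left]; nra.
  apply/andP; split; apply/orP; [left|left]; lra.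
have [_] := @Iset_sub alpha n c (sub _ cab); rewrite gc normr0; lra.
Qed.

Lemma Iset_sign (alpha : R) n x : (0 < n)%N -> Iset alpha n x ->
  1 <= (-1) ^+ n * gfun alpha x.
Proof.
move=> n0 Ix; have In := @Iset_n alpha n n0.
have hp : 0 < (-1) ^+ n * gfun alpha x.
  rewrite -(g_nat alpha n).
  have [xn|nx] := leP x n%:R.
    by rewrite mulrC; exact: (@Iset_prod alpha n x n%:R xn Ix In).
  exact: (@Iset_prod alpha n n%:R x (ltW nx) In Ix).
have [_ g1] := @Iset_sub alpha n x Ix.
have : `|(-1) ^+ n * gfun alpha x| = (-1) ^+ n * gfun alpha x by rewrite gtr0_norm.
by rewrite normrM normrX normrN1 expr1n mul1r => <-.
Qed.

Lemma sig_cases (n : nat) : (-1) ^+ n = 1 :> R \/ (-1) ^+ n = -1 :> R.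
Proof. by rewrite -signr_odd; case: (odd n); [right|left]; rewrite ?expr1 ?expr0. Qed.

Lemma Iset_range (alpha : R) n x : (0 < n)%N -> Iset alpha n x -> `|x - n%:R| < 1.
Proof.
move=> n0 Ix; have In := @Iset_n alpha n n0.
rewrite ltNge; apply/negP => h.
have [m [Im hm]] : exists m : nat, Iset alpha n m%:R /\ (-1) ^+ n * (-1) ^+ m = -1 :> R.
  have [xp|xn] := leP n%:R x.
    exists n.+1; split; last by rewrite exprS mulN1r mulrN -expr2 sqrr_sign.
    rewrite ger0_norm ?subr_ge0 // in h.
    apply: (@Iset_int alpha n _ _ In Ix); rewrite -natr1 lerDl ler01 /=; lra.
  exists n.-1; split; last first.
    by rewrite -{1}(prednK n0) exprS mulN1r mulNr -expr2 sqrr_sign.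
  rewrite ltr0_norm ?subr_lt0 // in h.
  have e : (n.-1)%:R = n%:R - 1 :> R by rewrite -(prednK n0) -natr1 addrK prednK.
  apply: (@Iset_int alpha n _ _ Ix In); rewrite e; apply/andP; split; lra.
have := @Iset_sign alpha n _ n0 Im; rewrite g_nat hm; lra.
Qed.
End S.

Theorem proposition3p2 (R : realType) (alpha : R) (n : nat) :
  alpha != 0 -> (0 < n)%N ->
  (forall x : R, Iset alpha n x -> x != n%:R ->
     ((-1 < ffun alpha x < 1) \/ ffun alpha x = (-1) ^+ n) /\
     (ffun alpha x = (-1) ^+ n <-> `|gfun alpha x| = 1)) /\
  (ffun alpha @ within [set x | Iset alpha n x /\ x != n%:R] (nbhs (n%:R : R))
     --> ((-1) ^+ n.+1 : R)).
Proof.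
move=> a0 n0.
have hs := sig_cases R n.
have key : forall x, Iset alpha n x -> 0 < x /\
    ffun alpha x = - cos (x * pi) + sin (x * pi) ^+ 2 /
      (alpha / (4 * x) * sin (x * pi) + (-1) ^+ n * Num.sqrt (gfun alpha x ^+ 2 - 1)) /\
    1 <= (-1) ^+ n * gfun alpha x.
  move=> x Ix; have [x0 _] := @Iset_sub R alpha n x Ix.
  have g1 := @Iset_sign R alpha n x n0 Ix.
  split=> //; split=> //; rewrite /ffun.
  case: hs g1 => -> g1.
    by rewrite gtr0_sg //; lra.
  by rewrite ltr0_sg //; lra.
split.
  move=> x Ix xn; have [x0 [-> g1]] := key x Ix.
  have cE : cos (x * pi) = (-1) ^+ n * cos ((x - n%:R) * pi).
    by rewrite -cosnpi addrC subrK.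
  have cn : cos (x * pi) != (-1) ^+ n.
    apply/negP => /eqP h.
    have t1 : 0 < `|x - n%:R| < 1.
      by rewrite normr_gt0 subr_eq0 xn /=; exact: (@Iset_range R alpha n x n0 Ix).
    have := @cos_lt1 R _ t1.
    have : cos ((x - n%:R) * pi) = 1.
      move: h; rewrite cE; case: hs => ->; first by rewrite mul1r.
      by move/eqP; rewrite mulN1r eqr_opp => /eqP.
    by move=> ->; rewrite ltxx.
  have gp : 0 <= gfun alpha x ^+ 2 - 1.
    by rewrite subr_ge0; case: hs g1 => -> g1; nra.
  have gE : gfun alpha x = cos (x * pi) + alpha / (4 * x) * sin (x * pi) by [].
  exact: (@alg R _ _ _ _ _ _ hs (cos2Dsin2 _) gE (sqrtr_ge0 _) (sqr_sqrtr gp) g1 cn).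
set σ := (-1) ^+ n : R.
pose h (y : R) := `|cos (y * pi) - σ| + `|sin (y * pi)| * (4 * `|y| * `|alpha|^-1).
have hc : {for n%:R, continuous h}.
  have hcos : {for n%:R, continuous (fun y : R => cos (y * pi))}.
    exact: (continuous_comp (@cont_pi R n%:R) (@continuous_cos R _)).
  have hsin : {for n%:R, continuous (fun y : R => sin (y * pi))}.
    exact: (continuous_comp (@cont_pi R n%:R) (@continuous_sin R _)).
  have h1 : {for n%:R, continuous (fun y : R => `|cos (y * pi) - σ|)}.
    have hb : {for n%:R, continuous (fun y : R => cos (y * pi) - σ)}.
      by have := continuousB hcos (cvg_cst σ); apply.
    by have := continuous_comp hb (@norm_continuous _ R^o _); apply.
  have h2 : {for n%:R, continuous (fun y : R => `|sin (y * pi)|)}.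
    by have := continuous_comp hsin (@norm_continuous _ R^o _); apply.
  have h3 : {for n%:R, continuous (fun y : R => 4 * `|y| * `|alpha|^-1)}.
    have hn : {for n%:R, continuous (fun y : R => `|y|)}.
      exact: (@norm_continuous _ R^o _).
    have h4 : {for n%:R, continuous (fun y : R => 4 * `|y|)}.
      by have := continuousM (cvg_cst (4:R)) hn; apply.
    by have := continuousM h4 (cvg_cst (`|alpha|^-1)); apply.
  by have := continuousD h1 (continuousM h2 h3); apply.
have h0 : h n%:R = 0.
  rewrite /h -[n%:R]addr0 cosnpi sinnpi !mul0r cos0 sin0 mulr1 mulr0 normr0 mul0r.
  by rewrite /σ subrr normr0 addr0.
apply/cvgrPdist_lt => e e0.
move/cvgrPdist_lt : hc => /(_ e e0); rewrite h0 => H.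
rewrite near_withinE; move: H; apply: filterS => t ht [It tn].
have [t0 [-> g1]] := key t It.
set c := cos (t * pi); set s := sin (t * pi); set A := alpha / (4 * t).
set r := Num.sqrt (gfun alpha t ^+ 2 - 1).
have c1 : c ^+ 2 <= 1 by have := cos2Dsin2 (t * pi); rewrite -/c -/s; nra.
have gE : gfun alpha t = c + A * s by [].
have A0 : A != 0 by rewrite mulf_neq0 // invr_neq0 // mulf_neq0 // gt_eqF.
have b := @bnd R _ _ _ _ _ _ hs c1 gE (sqrtr_ge0 _) g1 A0.
have hA : `|s| / `|A| = `|s| * (4 * `|t| * `|alpha|^-1).
  rewrite /A normrM normfV normrM (ger0_norm (_ : 0 <= 4)) //.
  have : `|alpha| != 0 by rewrite normr_eq0.
  have : `|t| != 0 by rewrite normr_eq0 gt_eqF.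
  move=> ? ?; field; apply/andP; split => //.
rewrite sub0r normrN /h -/c -/s -/σ in ht.
have ht' : `|c - σ| + `|s| * (4 * `|t| * `|alpha|^-1) < e.
  by apply: le_lt_trans ht; apply: ler_norm.
rewrite exprS mulN1r -/σ.
have -> : - σ - (- c + s ^+ 2 / (A * s + σ * r)) = (c - σ) - s ^+ 2 / (A * s + σ * r) by ring.
apply: le_lt_trans (ler_normB _ _) _.
rewrite -hA in ht'; apply: le_lt_trans ht'; rewrite lerD2l; exact: b.
Qed.
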